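(* Let $K$ be a finite field of characteristic $p$ and order $q$, let $s$ be a positive integer with $\gcd(s,q-1)=1$, and let $\tau$ be the permutation of $\mathcal{W}_{K,s}$ defined below, of order $m$. Let $A_0,\dots,A_{k-1}$ be distinct elements of $\mathcal{W}_{K,s}$ with $\tau(A_i)=A_{i+1}$ for all $i\in\mathbb{Z}/k\mathbb{Z}$. Then $k\mid m$, and $N_{A_0}=N_{A_1}=\cdots=N_{A_{k-1}}$, and this common value is a multiple of $m/k$.
   Context: $\zeta=\exp(2\pi i/p)$, $\psi(x)=\zeta^{\mathrm{Tr}(x)}$ with $\mathrm{Tr}$ the absolute trace of $K$ to $\mathbb{F}_p$; $W_u=\sum_{x\in K}\psi(x^s-ux)$ for $u\in K$; $\mathcal{W}_{K,s}=\{W_u:u\in K^\times\}$; for $A\in\mathbb{Z}[\zeta]$, $N_A=|\{u\in K^\times: W_u=A\}|$. Let $\gamma$ be a primitive element of $\mathbb{F}_p$ and $\sigma\in\mathrm{Gal}(\mathbb{Q}(\zeta)/\mathbb{Q})$ with $\sigma(\zeta)=\zeta^\gamma$; it is known that $\sigma(W_u)=W_{\gamma^{1-1/s}u}$ for all $u$ (with $1/s$ the inverse of $s$ mod $p-1$), so $\sigma$ restricts to a permutation $\tau$ of $\mathcal{W}_{K,s}$. *)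

(* Defs.v *)
From HB Require Import structures.
From mathcomp Require Import all_boot all_order all_algebra all_field.
Set Implicit Arguments. Unset Strict Implicit. Unset Printing Implicit Defensive.
Import Order.TTheory GRing.Theory Num.Theory.
Local Open Scope ring_scope.

(* zeta = exp(2 pi i / p) in the algebraic complex numbers algC:
   p.-root (-1) is the p-th root of -1 with minimal nonnegative argument,
   i.e. exp(i pi / p); its square is exp(2 i pi / p). *)
Definition zeta (p : nat) : algC := (p.-root (-1)) ^+ 2.

Section WeilSums.
Variables (K : finFieldType) (p s : nat).

Definition abs_trace (x : K) : K :=
  \sum_(i < logn p #|K|) x ^+ (p ^ i).

Definition trace_nat (x : K) : nat :=
  odflt 0%N (omap (@nat_of_ord p) [pick i : 'I_p | (i%:R : K) == abs_trace x]).

Definition psi (x : K) : algC := zeta p ^+ trace_nat x.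

Definition W (u : K) : algC := \sum_(x : K) psi (x ^+ s - u * x).

Definition inW (A : algC) : Prop := exists2 u : K, u != 0 & W u = A.

Definition NA (A : algC) : nat := #|[set u : K | (u != 0) && (W u == A)]|.

End WeilSums.

(* Main.v *)
Require Import Defs.
From HB Require Import structures.
From mathcomp Require Import all_boot all_order all_algebra all_field.
From mathcomp Require Import ring.
Import Order.TTheory GRing.Theory Num.Theory.
Local Open Scope ring_scope.
Set Implicit Arguments. Unset Strict Implicit.

Lemma natr_modp (R : nzRingType) p (hc : p \in [pchar R]) n :
  ((n %% p)%:R : R) = n%:R.
Proof.
by rewrite {2}(divn_eq n p) natrD natrM (pcharf0 hc) mulr0 add0r.
Qed.

Lemma natr_eq_mod (R : nzRingType) p (hc : p \in [pchar R]) i j :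
  (i%:R : R) = j%:R -> (i %% p = j %% p)%N.
Proof.
wlog lij : i j / (i <= j)%N.
  move=> H; case: (leqP i j) => [/H//|/ltnW lji E]; symmetry; exact: H.
move=> E; have Ej : j = (i + (j - i))%N by rewrite subnKC.
rewrite Ej in E *; move: E; rewrite natrD -{1}(addr0 (i%:R)) => /addrI /esym/eqP.
rewrite -(dvdn_pcharf hc) => /dvdnP[q ->].
by rewrite addnC modnMDl.
Qed.

Lemma zeta_p p : prime p -> zeta p ^+ p = 1.
Proof.
move=> hp; rewrite /zeta exprAC rootCK ?prime_gt0 //.
by rewrite expr2 mulrNN mulr1.
Qed.

Lemma zeta_mod p n : prime p -> zeta p ^+ n = zeta p ^+ (n %% p).
Proof.
move=> hp; rewrite {1}(divn_eq n p) exprD mulnC exprM.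
by rewrite zeta_p // expr1n mul1r.
Qed.

Lemma trM (K : finFieldType) p (hc : p \in [pchar K]) a (y : K) :
  abs_trace p (a%:R * y) = a%:R * abs_trace p y.
Proof.
rewrite /abs_trace mulr_sumr; apply: eq_bigr => i _.
rewrite exprMn; congr (_ * _).
elim: (nat_of_ord i) => [|n IH]; first by rewrite expn0 expr1.
rewrite expnSr exprM IH.
by rewrite -(pFrobenius_autE hc) rmorph_nat.
Qed.

Lemma psiE (K : finFieldType) p (hp : prime p) (hc : p \in [pchar K]) (y : K) n :
  abs_trace p y = n%:R -> psi p y = zeta p ^+ n.
Proof.
move=> E; rewrite /psi /trace_nat.
case: pickP => [i /eqP Ei | H] /=.
  rewrite (zeta_mod _ hp) [in RHS](zeta_mod _ hp); congr (_ ^+ _).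
  by apply: (@natr_eq_mod K p hc); rewrite Ei E.
have := H (Ordinal (ltn_pmod n (prime_gt0 hp))).
by rewrite /= natr_modp // E eqxx.
Qed.

Lemma psi_none (K : finFieldType) p (y : K) :
  (forall n, abs_trace p y != n%:R) -> psi p y = 1.
Proof.
move=> H; rewrite /psi /trace_nat.
case: pickP => [i /eqP Ei | _] /=; last by rewrite expr0.
by have := H i; rewrite Ei eqxx.
Qed.

Lemma gamma_inv p (hp : prime p) gamma
  (hgamma : (p.-1).-primitive_root (gamma%:R : 'F_p)) :
  exists g', (gamma * g' = 1 %[mod p])%N.
Proof.
have ndvd : ~~ (p %| gamma)%N.
  apply/negP => /dvdnP[q Eq].
  have := prim_expr_order hgamma.
  have -> : (gamma%:R : 'F_p) = 0.
    by apply/eqP; rewrite -(dvdn_pcharf (pchar_Fp hp)) Eq dvdn_mull.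
  rewrite expr0n; have p1 := prime_gt1 hp.
  have -> : (p.-1 == 0)%N = false by case: (p) p1 => [|[|]].
  by move/eqP; rewrite eq_sym oner_eq0.
have gpos : (0 < gamma)%N by move: ndvd; case: (gamma) => //; rewrite dvdn0.
have cop : coprime gamma p by rewrite coprime_sym prime_coprime.
case: (egcdnP p gpos) => km kn E _.
exists km; rewrite mulnC E (eqP cop).
by rewrite -modnDml modnMl.
Qed.

Lemma psi_sigma (K : finFieldType) p (hp : prime p) (hc : p \in [pchar K])
  gamma (sigma : {rmorphism algC -> algC})
  (hsigma : sigma (zeta p) = zeta p ^+ gamma) g'
  (hg' : (gamma * g' = 1 %[mod p])%N) (y : K) :
  sigma (psi p y) = psi p (gamma%:R * y).
Proof.
case: (boolP [exists n : 'I_p, abs_trace p y == n%:R]).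
  case/existsP => n /eqP En.
  rewrite (psiE hp hc En) (@psiE K p hp hc _ (gamma * n)); last first.
    by rewrite trM // En natrM.
  by rewrite rmorphXn hsigma -exprM.
move=> Hn.
have Hall : forall (z : K), (forall n : 'I_p, abs_trace p z != n%:R) ->
    forall n, abs_trace p z != n%:R.
  move=> z Hz n; rewrite -(natr_modp hc).
  exact: (Hz (Ordinal (ltn_pmod n (prime_gt0 hp)))).
have H1 : forall n, abs_trace p y != n%:R.
  apply: Hall => n; apply/negP => En; case/negP: Hn; apply/existsP; by exists n.
rewrite (psi_none H1) rmorph1 psi_none //.
move=> n; apply/negP => /eqP En.
have := H1 (g' * n)%N.
have : abs_trace p ((g' * gamma)%:R * y) = (g' * n)%:R.
  by rewrite natrM -mulrA trM // En natrM.
rewrite -(natr_modp hc) mulnC hg' natr_modp // mul1r => ->.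
by rewrite eqxx.
Qed.

Lemma unit_pow_card (K : finFieldType) (z : K) : z != 0 -> z ^+ (#|K| - 1) = 1.
Proof.
move=> nz; apply: (mulfI nz); rewrite mulr1 -exprS.
have q0 : (0 < #|K|)%N by apply/card_gt0P; exists 0.
by rewrite subn1 prednK // expf_card.
Qed.

Lemma exists_root (K : finFieldType) s (hs : (0 < s)%N) (hcop : coprime s (#|K| - 1))
  (z : K) : z != 0 -> exists h, h ^+ s = z.
Proof.
move=> nz; case: (egcdnP (#|K| - 1) hs) => km kn E _.
exists (z ^+ km); rewrite -exprM E (eqP hcop) exprD mulnC exprM.
by rewrite unit_pow_card // expr1n mul1r expr1.
Qed.

Lemma W_sigma (K : finFieldType) p (hp : prime p) (hc : p \in [pchar K])
  s (hs : (0 < s)%N) (hcop : coprime s (#|K| - 1))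
  gamma (hgamma : (p.-1).-primitive_root (gamma%:R : 'F_p))
  (sigma : {rmorphism algC -> algC})
  (hsigma : sigma (zeta p) = zeta p ^+ gamma) :
  exists2 c : K, c != 0 & forall u, sigma (W p s u) = W p s (c * u).
Proof.
have [g' hg'] := gamma_inv hp hgamma.
set G : K := gamma%:R.
have GG : G * g'%:R = 1 by rewrite -natrM -(natr_modp hc) hg' natr_modp.
have Gnz : G != 0 by apply/negP => /eqP G0; move: GG; rewrite G0 mul0r => /eqP; rewrite eq_sym oner_eq0.
have [h hh] := exists_root hs hcop (invr_neq0 Gnz).
have hnz : h != 0.
  apply/negP => /eqP h0; move: hh; rewrite h0 expr0n.
  rewrite gtn_eqF // => /eqP; by rewrite eq_sym invr_eq0 (negPf Gnz).

exists (G * h); first by rewrite mulf_neq0.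
move=> u; rewrite /W rmorph_sum.
rewrite (reindex_inj (mulfI hnz)) /=.
apply: eq_bigr => x _.
rewrite (psi_sigma hp hc hsigma hg'); congr (psi p _).
rewrite -/G mulrBr exprMn hh mulrA mulfV // mul1r; congr (_ - _).
by ring.
Qed.
Unset Implicit Arguments.
Theorem lemma2p3
  (K : finFieldType) (p : nat) (hp : prime p) (hchar : p \in [pchar K])
  (s : nat) (hs : (0 < s)%N) (hcop : coprime s (#|K| - 1))
  (gamma : nat) (hgamma : (p.-1).-primitive_root (gamma%:R : 'F_p))
  (sigma : {rmorphism algC -> algC})
  (hsigma : sigma (zeta p) = zeta p ^+ gamma)
  (m : nat) (hm0 : (0 < m)%N)
  (hm : forall u : K, u != 0 -> iter m sigma (W p s u) = W p s u)
  (hmmin : forall m' : nat, (0 < m')%N ->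
      (forall u : K, u != 0 -> iter m' sigma (W p s u) = W p s u) -> (m <= m')%N)
  (k : nat) (hk : (0 < k)%N) (A : nat -> algC)
  (hAW : forall i, (i < k)%N -> @inW K p s (A i))
  (hAinj : forall i j, (i < k)%N -> (j < k)%N -> A i = A j -> i = j)
  (hAcyc : forall i, (i < k)%N -> sigma (A i) = A ((i + 1) %% k)%N) :
  (k %| m)%N /\
  (forall i, (i < k)%N -> @NA K p s (A i) = @NA K p s (A 0%N)) /\
  (m %/ k %| @NA K p s (A 0%N))%N.
Proof.
have [c cnz hcW] := W_sigma hp hchar hs hcop hgamma hsigma.
have iterW : forall j (u : K), iter j sigma (W p s u) = W p s (c ^+ j * u).
  elim=> [|j IH] u; first by rewrite expr0 mul1r.
  by rewrite iterS IH hcW exprS mulrA.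
have sinj : forall j, injective (iter j sigma).
  elim=> [|j IH] x y //=; move/(fmorph_inj sigma); exact: IH.
have mdiv : forall n, (0 < n)%N ->
    (forall u : K, u != 0 -> iter n sigma (W p s u) = W p s u) -> (m %| n)%N.
  move=> n n0 Hn.
  have Hq : forall q (u : K), u != 0 -> iter (q * m) sigma (W p s u) = W p s u.
    elim=> [|q IH] u unz; first by [].
    by rewrite mulSn iterD IH // hm.
  rewrite dvdn_eq; apply/eqP; move: (divn_eq n m) => En.
  case: (posnP (n %% m)) => [r0|rpos].
    by rewrite {2}En r0 addn0.
  have : (m <= n %% m)%N.
    apply: hmmin => // u unz.
    move: (Hn u unz); rewrite {1}En addnC iterD Hq //.
  by rewrite leqNgt ltn_pmod.
have hAorb : forall j, iter j sigma (A 0%N) = A (j %% k)%N.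
  elim=> [|j IH]; first by rewrite mod0n.
  by rewrite iterS IH hAcyc ?ltn_pmod // modnDml addn1.
have [u0 u0nz Wu0] := hAW 0%N hk.
have kdm : (k %| m)%N.
  have := hAorb m; rewrite -Wu0 hm // Wu0 => /esym/hAinj.
  by move=> H; rewrite /dvdn (H (ltn_pmod _ hk) hk).
split => //.
have NAs : forall B, @NA K p s (sigma B) = @NA K p s B.
  move=> B; rewrite /NA.
  have -> : [set u : K | (u != 0) && (W p s u == sigma B)] =
      [set c * u | u in [set u : K | (u != 0) && (W p s u == B)]].
    apply/setP => v; rewrite inE; apply/idP/imsetP.
      case/andP => vnz /eqP Wv; exists (c^-1 * v); last by rewrite mulVKf.
      rewrite inE mulf_neq0 ?invr_eq0 //=; apply/eqP/(fmorph_inj sigma).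
      by rewrite hcW mulVKf.
    case=> u; rewrite inE => /andP[unz /eqP Wu] ->.
    by rewrite mulf_neq0 //= -hcW Wu eqxx.
  by rewrite card_imset //; exact: mulfI.
split.
  move=> i ik; have := hAorb i; rewrite modn_small // => <-.
  elim: i {ik} => [|i IH] //; by rewrite iterS NAs.
set S := [set u : K | (u != 0) && (W p s u == A 0%N)].
set g := c ^+ k.
have gnz : g != 0 by rewrite expf_neq0.
pose f := fun u : K => g * u.
have finj : injective f by exact: mulfI.
have iterf : forall j x, iter j f x = g ^+ j * x.
  elim=> [|j IH] x; first by rewrite expr0 mul1r.
  by rewrite iterS IH /f exprS mulrA.
have clS : fclosed f S.
  move=> x y /eqP <-; rewrite /f !inE mulf_eq0 (negPf gnz) /=.
  congr (_ && _); rewrite /g -iterW.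
  have {2}-> : A 0%N = iter k sigma (A 0%N) by rewrite hAorb modnn.
  by rewrite (inj_eq (sinj k)).
have ordle : forall x y : K, x != 0 -> y != 0 -> (order f x <= order f y)%N.
  move=> x y xnz ynz; rewrite leqNgt; apply/negP => lt.
  have go : g ^+ (order f y) = 1.
    apply: (mulIf ynz); rewrite mul1r -iterf; exact: iter_order.
  have := findex_iter lt; rewrite iterf go mul1r findex0 => H.
  by have := order_gt0 f y; rewrite -H.
set o := order f u0.
have Sord : S \subset order_set f o.
  apply/subsetP => x; rewrite inE => /andP[xnz _].
  by rewrite inE eqn_leq !ordle.
have := fcard_order_set finj Sord clS => ES.
have go : g ^+ o = 1.
  apply: (mulIf u0nz); rewrite mul1r -iterf; exact: iter_order.
have mko : (m %| k * o)%N.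
  apply: mdiv; first by rewrite muln_gt0 hk order_gt0.
  by move=> u unz; rewrite iterW exprM go mul1r.
have mk_o : (m %/ k %| o)%N.
  by rewrite -(dvdn_pmul2r hk) divnK // mulnC.
rewrite /NA -/S -ES; exact: dvdn_mull.
Qed.
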